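(* Consider the networked $SIRS$-$V_o$ system without media actuator described in the context, with initial condition at time $t_0$ satisfying $o_i(t_0),s_i(t_0),x_i(t_0),r_i(t_0),v_i(t_0)\in[0,1]$ and $s_i(t_0)+x_i(t_0)+r_i(t_0)+v_i(t_0)=1$ for all $i$. If $o(t_0)\in[0,1]^n$, then $o_i(t)\in[0,1]$ for all $i\in[n]$ and all $t>t_0$.
   Context: There are $n$ nodes. All parameters are real and nonnegative: $a_{ij},\beta_{ij},\gamma_i,\omega_i,\delta_i,\eta^{\min}_{ij},\Delta\eta_{ij}$. Let $A=[a_{ij}]$, $B=[\beta_{ij}]$, $H_{\min}=[\eta^{\min}_{ij}]$, $\Delta H=[\Delta\eta_{ij}]$. For a square matrix $M$, $k_i[M]=\sum_j M_{ij}$, $\widetilde K[M]=\mathrm{diag}(k_i[M])$, $L[M]=\widetilde K[M]-M$. Let $\widetilde G=\mathrm{diag}(\gamma_i)$, $\widetilde W=\mathrm{diag}(\omega_i)$, $\widetilde D=\mathrm{diag}(\delta_i)$, $H(o)=\mathrm{diag}(o)\Delta H+H_{\min}$. State $(o,s,x,r,v)\in(\mathbb{R}^n)^5$, $\widetilde S=\mathrm{diag}(s)$, $\widetilde R=\mathrm{diag}(r)$, dynamics $\dot o=A(x-o)-2L[A]o$, $\dot s=\widetilde Dv-\widetilde S(Bx+H(o)v)+\widetilde Wr$, $\dot x=\widetilde SBx-\widetilde Gx$, $\dot r=\widetilde Gx-\widetilde Wr-\widetilde RH(o)v$, $\dot v=(\widetilde S+\widetilde R)H(o)v-\widetilde Dv$.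 *)

(* Defs.v *)
From HB Require Import structures.
From mathcomp Require Import all_boot all_order all_algebra.
From mathcomp Require Import all_classical all_reals all_analysis.
Set Implicit Arguments. Unset Strict Implicit. Unset Printing Implicit Defensive.
Import Order.TTheory GRing.Theory Num.Theory.
Import numFieldNormedType.Exports.
Local Open Scope ring_scope.

Definition kvec (R : realType) (n : nat) (M : 'M[R]_n) : 'cV[R]_n :=
  \col_i (\sum_j M i j).

Definition diagc (R : realType) (n : nat) (v : 'cV[R]_n) : 'M[R]_n :=
  diag_mx v^T.

Definition Ktil (R : realType) (n : nat) (M : 'M[R]_n) : 'M[R]_n :=
  diagc (kvec M).

Definition Lap (R : realType) (n : nat) (M : 'M[R]_n) : 'M[R]_n :=
  Ktil M - M.

Definition Hof (R : realType) (n : nat) (dH Hmin : 'M[R]_n) (o : 'cV[R]_n)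
  : 'M[R]_n := diagc o *m dH + Hmin.

Definition rhs_o (R : realType) (n : nat) (A : 'M[R]_n) (o x : 'cV[R]_n)
  : 'cV[R]_n := A *m (x - o) - 2%:R *: (Lap A *m o).

Definition rhs_s (R : realType) (n : nat) (B dH Hmin : 'M[R]_n)
  (omega delta : 'cV[R]_n) (o s x r v : 'cV[R]_n) : 'cV[R]_n :=
  diagc delta *m v - diagc s *m (B *m x + Hof dH Hmin o *m v)
  + diagc omega *m r.

Definition rhs_x (R : realType) (n : nat) (B : 'M[R]_n)
  (gamma : 'cV[R]_n) (s x : 'cV[R]_n) : 'cV[R]_n :=
  diagc s *m B *m x - diagc gamma *m x.

Definition rhs_r (R : realType) (n : nat) (dH Hmin : 'M[R]_n)
  (gamma omega : 'cV[R]_n) (o x r v : 'cV[R]_n) : 'cV[R]_n :=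
  diagc gamma *m x - diagc omega *m r - diagc r *m Hof dH Hmin o *m v.

Definition rhs_v (R : realType) (n : nat) (dH Hmin : 'M[R]_n)
  (delta : 'cV[R]_n) (o s r v : 'cV[R]_n) : 'cV[R]_n :=
  (diagc s + diagc r) *m Hof dH Hmin o *m v - diagc delta *m v.

Local Open Scope classical_set_scope.
Definition cont_from (R : realType) (t0 : R) (f : R -> R) : Prop :=
  {within `[t0, +oo[, continuous f}.

(* Main.v *)
Require Import Defs.
From HB Require Import structures.
From mathcomp Require Import all_boot all_order all_algebra.
From mathcomp Require Import all_classical all_reals all_analysis.
From mathcomp Require Import ring lra.
Import Order.TTheory GRing.Theory Num.Theory.
Import numFieldNormedType.Exports.
Local Open Scope ring_scope.
Local Open Scope classical_set_scope.
Lemma deriv_pos_contra (R : realType) (f : R -> R) (a tau d : R) :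
  a < tau -> is_derive tau 1 f d -> 0 < d -> f tau = 0 ->
  (forall u, a <= u -> u < tau -> 0 < f u) -> False.
Proof.
move=> atau [Hd Hv] d0 ft hpos.
have Hc : (fun h : R => h^-1 *: ((f \o shift tau) (h *: 1) - f tau)) @ 0^' --> d.
  by rewrite -Hv; exact: Hd.
have H1 := @cvgr_gt _ _ _ (dnbhs_filter _) _ _ Hc _ d0.
move: H1; rewrite near_withinE => H1. have [e /= e0 He] := (nbhs_ballP _ _).1 H1.
pose h := - (Num.min (e / 2) (tau - a)).
have hlt : h < 0 by rewrite /h oppr_lt0 lt_min divr_gt0 // subr_gt0 atau.
have : 0 < h^-1 *: ((f \o shift tau) (h *: 1) - f tau).
  apply: He; last by rewrite lt_eqF.
  rewrite /ball /= sub0r normrN ltr0_norm //.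
  rewrite /h opprK; rewrite gt_min; apply/orP; left.
  by rewrite ltr_pdivrMr // ltr_pMr // ltr1n.
rewrite /= ft subr0.
rewrite -[h%:A]/(h * 1) mulr1 -[h^-1 *: _]/(h^-1 * _) nmulr_rgt0 ?invr_lt0 // => hf.
have := hpos (h + tau); rewrite gtrDr hlt; have -> : a <= h + tau.
  rewrite -lerBlDr /h.
  by rewrite -opprB lerN2 ge_min lexx orbT.
by move=> /(_ isT isT); rewrite ltNge (ltW hf).
Qed.

Lemma is_derive_g (R : realType) (e K t0 t : R) :
  is_derive t 1 (fun u => e * expR (K * (u - t0))) (K * (e * expR (K * (t - t0)))).
Proof.
have h0 : is_derive t (1:R) (@id R - cst t0) (1 - 0) by apply: is_deriveB.
have h1 : is_derive t (1:R) (cst K * (@id R - cst t0)) (cst K t *: (1 - 0) + (@id R - cst t0) t *: 0).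
  by apply: is_deriveM.
have h2 := is_derive1_comp (is_derive_expR _) h1.
have h3 : is_derive t (1:R) (cst e * (expR \o (cst K * (@id R - cst t0)))) (cst e t *: (expR ((cst K * (@id R - cst t0)) t) * (cst K t *: (1 - 0) + (@id R - cst t0) t *: 0)) + (expR \o (cst K * (@id R - cst t0))) t *: 0).
  by apply: is_deriveM.
have -> : (fun u => e * expR (K * (u - t0))) = (cst e * (expR \o (cst K * (@id R - cst t0)))) by apply/funext.
apply: (is_derive_eq h3).
rewrite /= /GRing.scale /= !mulr0 !addr0 subr0 mulr1; ring.
Qed.

Lemma near_left_pick (R : realType) (P : R -> Prop) (a tau : R) :
  a < tau -> (\forall u \near tau, P u) -> exists u, [/\ a <= u, u < tau & P u].
Proof.
move=> atau H; have [r /= r0 Hr] := (nbhs_ballP _ _).1 H.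
pose m := Num.min (r / 2) (tau - a).
have m0 : 0 < m by rewrite /m lt_min divr_gt0 // subr_gt0 atau.
exists (tau - m); split.
- by rewrite lerBrDr -lerBrDl /m ge_min lexx orbT.
- by rewrite ltrBlDr ltrDl.
- apply: Hr; rewrite /ball /= opprB addrC subrK gtr0_norm //.
  rewrite /m gt_min; apply/orP; left.
  by rewrite ltr_pdivrMr // ltr_pMr // ltr1n.
Qed.

Lemma near_right_pick (R : realType) (P : R -> Prop) (tau b : R) :
  tau < b -> (\forall u \near tau^'+, P u) ->
  exists u, [/\ tau < u, u <= b & forall w, tau < w -> w <= u -> P w].
Proof.
move=> taub H; move: H; rewrite near_withinE => H.
have [r /= r0 Hr] := (nbhs_ballP _ _).1 H.
pose m := Num.min (r / 2) (b - tau).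
have m0 : 0 < m by rewrite /m lt_min divr_gt0 // subr_gt0 taub.
exists (tau + m); split.
- by rewrite ltrDl.
- by rewrite -lerBrDl /m ge_min lexx orbT.
- move=> w tw wu; apply: Hr => //; rewrite /ball /= distrC gtr0_norm ?subr_gt0 //.
  rewrite ltrBlDl; apply: (le_lt_trans wu); rewrite ltrD2l.
  rewrite /m gt_min; apply/orP; left.
  by rewrite ltr_pdivrMr // ltr_pMr // ltr1n.
Qed.


Lemma barrier (R : realType) (I : finType) (t0 T C : R) (y y' : I -> R -> R) :
  0 <= C ->
  (forall i, {within `[t0, +oo[, continuous (y i)}) ->
  (forall i t, t0 < t -> t <= T -> is_derive t 1 (y i) (y' i t)) ->
  (forall i, 0 <= y i t0) ->
  (forall t g, t0 < t -> t <= T -> 0 < g -> (forall j, -g <= y j t) ->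
     forall i, y i t = -g -> -(C*g) <= y' i t) ->
  forall t, t0 <= t -> t <= T -> forall i, 0 <= y i t.
Proof.
move=> C0 cy dy y0 Hc.
pose K := C + 1.
suff Heps : forall e, 0 < e -> forall t, t0 <= t -> t <= T -> forall i,
    0 < y i t + e * expR (K * (t - t0)).
  move=> t ht0 htT i; rewrite leNgt; apply/negP => hneg.
  pose E := expR (K * (t - t0)).
  have E0 : 0 < E := expR_gt0 _.
  have := Heps (- y i t / (2 * E)) _ t ht0 htT i.
  rewrite -/E.
  have -> : - y i t / (2 * E) * E = - y i t / 2.
    by field; rewrite gt_eqF.
  have : 0 < - y i t / (2 * E) by rewrite divr_gt0 ?mulr_gt0 // oppr_gt0.
  move=> H /(_ H); lra.
move=> e e0 t ht0 htT.
have t0T : t0 <= T by apply: le_trans htT.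
pose g u := e * expR (K * (u - t0)).
pose h i u := y i u + g u.
have hg : forall u : R, is_derive u (1:R) g (K * g u) by move=> u; exact: is_derive_g.
have cg : forall u, {for u, continuous g}.
  move=> u; apply/differentiable_continuous/derivable1_diffP.
by case: (hg u).
have ht0pos : forall i, 0 < h i t0.
  by move=> i; rewrite /h /g subrr mulr0 expR0 mulr1; apply: ltr_pwDr.
have ch : forall i u, t0 < u -> {for u, continuous (h i)}.
  move=> i u tu; apply: cvgD; last exact: cg.
  have := (continuous_within_itvcyP _ _).1 (cy i).
  by case=> + _; apply; rewrite in_itv /= tu.
have chr : forall i u, t0 <= u -> h i x @[x --> u^'+] --> h i u.
  move=> i u; rewrite le_eqVlt => /orP[/eqP <-|tu].
    apply: cvgD; last exact: cvg_at_right_filter (cg t0).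
    by have := (continuous_within_itvcyP _ _).1 (cy i); case.
  exact: cvg_at_right_filter (ch i u tu).
pose S := [set u | (t0 <= u <= T) /\ forall w, t0 <= w -> w <= u -> forall i, 0 < h i w].
have S0 : S t0.
  split; first by rewrite lexx t0T.
  by move=> w h1 h2 i; have -> : w = t0 by apply/eqP; rewrite eq_le h1 h2.
have Sub : ubound S T by move=> u [/andP[_ ->]].
have hsup : has_sup S by split; [exists t0 | exists T].
set tau := sup S.
have tau0 : t0 <= tau := sup_upper_bound hsup S0.
have tauT : tau <= T := ge_sup (ex_intro _ t0 S0) Sub.
have FA : forall u, t0 <= u -> u < tau -> forall i, 0 < h i u.
  move=> u hu hut i.
  have hp : 0 < tau - u by rewrite subr_gt0.
  have [w [_ Sw] hw] := sup_adherent hp hsup.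
  rewrite -/tau opprB addrC subrK in hw.
  exact: Sw u hu (ltW hw) i.
have FB : forall i, 0 <= h i tau.
  move=> i; rewrite leNgt; apply/negP => hlt.
  have ttau : t0 < tau.
    rewrite lt_neqAle tau0 andbT; apply/eqP => et.
    by move: hlt; rewrite -et => /(lt_trans (ht0pos i)); rewrite ltxx.
  have := @cvgr_lt _ _ _ (nbhs_filter tau) _ _ (ch i tau ttau) 0 hlt.
  move=> /(@near_left_pick R _ _ _ ttau) [u [h1 h2 h3]].
  by move: (FA u h1 h2 i); rewrite ltNge (ltW h3).
have [[i Hz]|Hnz] := pselect (exists i, h i tau = 0).
  have ttau : t0 < tau.
    rewrite lt_neqAle tau0 andbT; apply/eqP => et.
    by move: (ht0pos i); rewrite et Hz ltxx.
  have dh : is_derive tau 1 (h i) (y' i tau + K * g tau).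
    apply: is_deriveD.
    exact: dy.
  exfalso; apply: (@deriv_pos_contra R (h i) t0 tau _ ttau dh _ Hz (fun u h1 h2 => FA u h1 h2 i)).
  have gt0 : 0 < g tau by rewrite /g mulr_gt0 // expR_gt0.
  have := Hc tau (g tau) ttau tauT gt0.
  move=> /(_ _ i) H.
  have Hj : forall j, - g tau <= y j tau by move=> j; have := FB j; rewrite /h; lra.
  have Hi : y i tau = - g tau by move: Hz; rewrite /h; lra.
  have := H Hj Hi; rewrite /K mulrDl mul1r; lra.
have Hpos : forall i, 0 < h i tau.
  move=> i; rewrite lt_neqAle FB andbT; apply/eqP => Hz; apply: Hnz; exists i; by rewrite Hz.
have [tT|tT] := eqVneq tau T.
  move=> i; move: htT; rewrite -tT le_eqVlt => /orP[/eqP ->|]; first exact: Hpos.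
  move=> htau; exact: FA t ht0 htau i.
have tauT' : tau < T by rewrite lt_neqAle tT tauT.
have Hn : \forall u \near tau^'+, forall i, 0 < h i u.
  apply: filter_forall => i.
  exact: (@cvgr_gt _ _ _ _ _ _ (chr i tau tau0) 0 (Hpos i)).
have [u [h1 h2 h3]] := @near_right_pick R _ tau T tauT' Hn.
have Su : S u.
  split; first by rewrite h2 andbT (le_trans tau0) // ltW.
  move=> w hw1 hw2 i.
  have [wt|wt|->] := ltgtP w tau; [exact: FA | exact: h3 | exact: Hpos].
have := sup_upper_bound hsup Su; rewrite -/tau => Hle.
by move: h1; rewrite ltNge Hle.
Qed.

Lemma le_sum1 (R : realDomainType) (I : finType) (f : I -> R) (i : I) :
  (forall j, 0 <= f j) -> f i <= \sum_j f j.
Proof.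
move=> h; rewrite (bigD1 i) //= lerDl; exact: sumr_ge0.
Qed.

Lemma barrier2 (R : realType) (I : finType) (t0 : R) (y y' : I -> R -> R) :
  (forall i, {within `[t0, +oo[, continuous (y i)}) ->
  (forall i t, t0 < t -> is_derive t 1 (y i) (y' i t)) ->
  (forall i, 0 <= y i t0) ->
  (forall M, 0 <= M -> forall i, exists C, 0 <= C /\ forall t g, t0 < t -> 0 < g ->
     (forall j, -g <= y j t) -> (forall j, `|y j t| <= M) -> y i t = -g -> -(C*g) <= y' i t) ->
  forall t, t0 <= t -> forall i, 0 <= y i t.
Proof.
move=> cy dy y0 Hc T t0T.
have bnd : forall j, exists Mj, 0 <= Mj /\ forall u, t0 <= u -> u <= T -> `|y j u| <= Mj.
  move=> j.
  have cj : {within `[t0, T], continuous (y j)}.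
    apply: continuous_subspaceW (cy j) => u /=.
    by move=> /[!in_itv] /= /andP[-> _].
  have [cM _ HM] := EVT_max t0T cj.
  have [cm _ Hm] := EVT_min t0T cj.
  exists (`|y j cM| + `|y j cm|); split; first by rewrite addr_ge0.
  move=> u h1 h2; have hu : u \in `[t0, T]%R by rewrite in_itv /= h1 h2.
  have := HM u hu; have := Hm u hu.
  have := ler_norm (y j cM); have := ler_normr (y j cm).
  have := ler_norm (- y j cm); rewrite normrN.
  have := ler_norm (y j cM).
  have := normr_ge0 (y j cM); have := normr_ge0 (y j cm).
  rewrite ler_norml; lra.
have [Mf HMf] := choice bnd.
pose M := \sum_j Mf j.
have M0 : 0 <= M by apply: sumr_ge0 => j _; case: (HMf j).
have [Cf HCf] := choice (Hc M M0).
pose C := \sum_i Cf i.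
have C0 : 0 <= C by apply: sumr_ge0 => j _; case: (HCf j).
apply: (@barrier R I t0 T C y y' C0 cy) => //.
- by move=> i u h1 _; exact: dy.
- move=> u g h1 h2 g0 Hj i Hi.
  have [Ci0 Hci] := HCf i.
  have := Hci u g h1 g0 Hj _ Hi.
  have : forall j, `|y j u| <= M.
    move=> j; apply: (le_trans _ (@le_sum1 _ _ Mf j _)); last by move=> k; case: (HMf k).
    by case: (HMf j) => _; apply => //; apply: ltW.
  move=> HM /(_ HM) H.
  have : Cf i <= C by apply: le_sum1 => k; case: (HCf k).
  move=> hC; apply: le_trans H; rewrite lerN2 ler_pM2r //.
Qed.


Section Comp.
Set Implicit Arguments. Unset Strict Implicit.
Variables (R : realType) (n : nat).
Implicit Types (A B dH Hmin : 'M[R]_n) (o s x r v d : 'cV[R]_n).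

Lemma subc (M N : 'cV[R]_n) i : (M - N) i ord0 = M i ord0 - N i ord0.
Proof. by rewrite !mxE. Qed.

Lemma addc (M N : 'cV[R]_n) i : (M + N) i ord0 = M i ord0 + N i ord0.
Proof. by rewrite !mxE. Qed.

Lemma scalec (a : R) (M : 'cV[R]_n) i : (a *: M) i ord0 = a * M i ord0.
Proof. by rewrite !mxE. Qed.

Lemma mulmx_c A x i : (A *m x) i ord0 = \sum_j A i j * x j ord0.
Proof. by rewrite mxE. Qed.

Lemma diagc_c d x i : (diagc d *m x) i ord0 = d i ord0 * x i ord0.
Proof. by rewrite /diagc mul_diag_mx !mxE. Qed.

Lemma diagcM d A i j : (diagc d *m A) i j = d i ord0 * A i j.
Proof. by rewrite /diagc mul_diag_mx !mxE. Qed.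

Definition hv dH Hmin o v i := \sum_j (o i ord0 * dH i j + Hmin i j) * v j ord0.
Definition bx B x i := \sum_j B i j * x j ord0.

Lemma Hof_c dH Hmin o v i : (Hof dH Hmin o *m v) i ord0 = hv dH Hmin o v i.
Proof.
rewrite mxE /hv; apply: eq_bigr => j _.
by rewrite /Hof !mxE; have := diagcM o dH i j; rewrite mxE => ->.
Qed.

Lemma rhs_o_c A o x i : rhs_o A o x i ord0 =
  \sum_j A i j * x j ord0 + \sum_j A i j * o j ord0 - 2 * ((\sum_j A i j) * o i ord0).
Proof.
have e1 : (A *m (x - o)) i ord0 = \sum_j A i j * x j ord0 - \sum_j A i j * o j ord0.
  by rewrite mulmxBr subc !mulmx_c.
have e2 : (Lap A *m o) i ord0 = (\sum_j A i j) * o i ord0 - \sum_j A i j * o j ord0.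
  by rewrite /Lap mulmxBl subc /Ktil diagc_c mulmx_c /kvec mxE.
rewrite /rhs_o subc scalec e1 e2; ring.
Qed.

Lemma rhs_s_c B dH Hmin omega delta o s x r v i :
  rhs_s B dH Hmin omega delta o s x r v i ord0 =
  delta i ord0 * v i ord0 - s i ord0 * (bx B x i + hv dH Hmin o v i) + omega i ord0 * r i ord0.
Proof.
by rewrite /rhs_s addc subc !diagc_c addc mulmx_c Hof_c /bx.
Qed.

Lemma rhs_x_c B gamma s x i : rhs_x B gamma s x i ord0 =
  s i ord0 * bx B x i - gamma i ord0 * x i ord0.
Proof.
by rewrite /rhs_x subc -mulmxA !diagc_c mulmx_c.
Qed.

Lemma rhs_r_c dH Hmin gamma omega o x r v i :
  rhs_r dH Hmin gamma omega o x r v i ord0 =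
  gamma i ord0 * x i ord0 - omega i ord0 * r i ord0 - r i ord0 * hv dH Hmin o v i.
Proof.
by rewrite /rhs_r !subc -mulmxA !diagc_c Hof_c.
Qed.

Lemma rhs_v_c dH Hmin delta o s r v i :
  rhs_v dH Hmin delta o s r v i ord0 =
  (s i ord0 + r i ord0) * hv dH Hmin o v i - delta i ord0 * v i ord0.
Proof.
by rewrite /rhs_v subc -mulmxA mulmxDl addc !diagc_c Hof_c mulrDl.
Qed.

End Comp.


Section Ineq.
Set Implicit Arguments. Unset Strict Implicit.
Variables (R : realFieldType) (n : nat).

Lemma lbM (a z g : R) : 0 <= a -> -g <= z -> -(a*g) <= a*z.
Proof. by move=> a0 hz; rewrite -mulrN ler_wpM2l. Qed.

Lemma lbabs (g z b : R) : 0 <= g -> `|z| <= b -> -(b*g) <= g*z.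
Proof.
move=> g0; rewrite ler_norml => /andP[h2 _].
by rewrite (mulrC b g) -mulrN ler_wpM2l.
Qed.

Lemma L1 (a z : 'I_n -> R) (b : R) : (forall j, 0 <= a j) -> (forall j, -b <= z j) ->
  -((\sum_j a j) * b) <= \sum_j a j * z j.
Proof.
move=> ha hz; rewrite mulr_suml -sumrN; apply: ler_sum => j _; exact: lbM.
Qed.

Lemma Lsum (e p : 'I_n -> R) (g : R) : (forall j, -(e j * g) <= p j) ->
  -((\sum_j e j) * g) <= \sum_j p j.
Proof. by move=> h; rewrite mulr_suml -sumrN; apply: ler_sum => j _. Qed.

Lemma L2 (a c z : 'I_n -> R) (b : R) : (forall j, `|a j| <= c j) -> (forall j, `|z j| <= b) ->
  0 <= b -> `|\sum_j a j * z j| <= (\sum_j c j) * b.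
Proof.
move=> ha hz b0; apply: le_trans (ler_norm_sum _ _ _) _.
rewrite mulr_suml; apply: ler_sum => j _; rewrite normrM.
by apply: ler_pM => //; exact: normr_ge0.
Qed.

Lemma L3 (a b g c1 c2 A B : R) : 0 < g -> 0 <= c1 -> 0 <= c2 -> -(c1*g) <= a -> -(c2*g) <= b ->
  `|a| <= A -> `|b| <= B -> -((c1*B + c2*A)*g) <= a*b.
Proof.
move=> g0 c10 c20 ha hb; rewrite !ler_norml => /andP[ha1 ha2] /andP[hb1 hb2].
have A0 : 0 <= A by lra.
have B0 : 0 <= B by lra.
have h1 : 0 <= c1 * g * B by rewrite mulr_ge0 // mulr_ge0 // ltW.
have h2 : 0 <= c2 * g * A by rewrite mulr_ge0 // mulr_ge0 // ltW.
rewrite mulrDl -!mulrA [B * g]mulrC [A * g]mulrC !mulrA.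
have [a0|a0] := leP 0 a; have [b0|b0] := leP 0 b.
- have : 0 <= a * b by apply: mulr_ge0.
  lra.
- have : a * b >= a * (- (c2 * g)) by rewrite ler_wpM2l.
  have : a * (- (c2 * g)) >= A * (- (c2 * g)) by rewrite ler_wnM2r // oppr_le0 mulr_ge0 // ltW.
  rewrite !mulrN !mulrA. lra.
- have : a * b >= (- (c1 * g)) * b by rewrite ler_wpM2r.
  have : (- (c1 * g)) * b >= (- (c1 * g)) * B by rewrite ler_wnM2l // oppr_le0 mulr_ge0 // ltW.
  rewrite !mulNr. lra.
- have : 0 <= a * b by rewrite nmulr_rge0 // ltW.
  lra.
Qed.
End Ineq.


Section Fam.
Set Implicit Arguments. Unset Strict Implicit.
Variables (R : realType) (n : nat) (A B Hmin dH : 'M[R]_n) (gamma omega delta : 'cV[R]_n).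
Hypotheses (hA : forall i j, 0 <= A i j) (hB : forall i j, 0 <= B i j)
  (hHmin : forall i j, 0 <= Hmin i j) (hdH : forall i j, 0 <= dH i j)
  (hgamma : forall i, 0 <= gamma i ord0) (homega : forall i, 0 <= omega i ord0)
  (hdelta : forall i, 0 <= delta i ord0).
Variables (M : R) (o s x r v : 'cV[R]_n) (g : R).
Hypotheses (hM : 0 <= M) (hg : 0 < g)
  (lo : forall j, -g <= o j ord0) (lw : forall j, -g <= 1 - o j ord0)
  (ls : forall j, -g <= s j ord0) (lx : forall j, -g <= x j ord0)
  (lr : forall j, -g <= r j ord0) (lv : forall j, -g <= v j ord0)
  (lq : forall j, -g <= 1 - (s j ord0 + x j ord0 + r j ord0 + v j ord0))
  (bo : forall j, `|o j ord0| <= M) (bs : forall j, `|s j ord0| <= M)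
  (bx' : forall j, `|x j ord0| <= M) (br : forall j, `|r j ord0| <= M)
  (bv : forall j, `|v j ord0| <= M).

Definition kA i := \sum_j A i j.
Definition kB i := \sum_j B i j.
Definition HBd i := (\sum_j (M * dH i j + Hmin i j)) * M.
Definition HL i := \sum_j (dH i j * M + 1 * (M * dH i j + Hmin i j)).

Lemma kA_ge0 i : 0 <= kA i. Proof. by apply: sumr_ge0. Qed.
Lemma kB_ge0 i : 0 <= kB i. Proof. by apply: sumr_ge0. Qed.
Lemma HBd_ge0 i : 0 <= HBd i.
Proof. by apply: mulr_ge0 => //; apply: sumr_ge0 => j _; rewrite addr_ge0 // mulr_ge0. Qed.
Lemma HL_ge0 i : 0 <= HL i.
Proof. by apply: sumr_ge0 => j _; rewrite addr_ge0 ?mul1r ?addr_ge0 // mulr_ge0. Qed.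

Lemma hv_abs i : `|hv dH Hmin o v i| <= HBd i.
Proof.
apply: L2 => // j; apply: le_trans (ler_normD _ _) _.
rewrite normrM (ger0_norm (hdH _ _)) (ger0_norm (hHmin _ _)) lerD2r.
by rewrite ler_wpM2r.
Qed.

Lemma hv_lb i : -(HL i * g) <= hv dH Hmin o v i.
Proof.
apply: Lsum => j; apply: L3 => //.
- have := lbM (hdH i j) (lo i); have := hHmin i j; rewrite (mulrC (o i ord0)); lra.
- by rewrite mul1r.
- apply: le_trans (ler_normD _ _) _.
  rewrite normrM (ger0_norm (hdH _ _)) (ger0_norm (hHmin _ _)) lerD2r.
  by rewrite ler_wpM2r.
Qed.

Lemma bx_abs i : `|bx B x i| <= kB i * M.
Proof. by apply: L2 => // j; rewrite ger0_norm. Qed.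

Lemma fam_o i : o i ord0 = -g -> -(0 * g) <= rhs_o A o x i ord0.
Proof.
move=> hi; rewrite rhs_o_c hi.
have h1 := L1 (hA i) lx; have h2 := L1 (hA i) lo.
rewrite mulrN; lra.
Qed.

Lemma fam_w i : 1 - o i ord0 = -g -> -((kA i * 3) * g) <= - rhs_o A o x i ord0.
Proof.
move=> hi; rewrite rhs_o_c.
have -> : - (\sum_j A i j * x j ord0 + \sum_j A i j * o j ord0 - 2 * ((\sum_j A i j) * o i ord0))
  = \sum_j A i j * (2 * o i ord0 - x j ord0 - o j ord0).
  rewrite [RHS](eq_bigr (fun j => (A i j * (2 * o i ord0)) - A i j * x j ord0 - A i j * o j ord0)); last first.
    by move=> j _; rewrite !mulrBr.
  rewrite !sumrB -mulr_suml; ring.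
rewrite -mulrA; apply: L1 => // j.
have := lq j; have := lw j; have := ls j; have := lr j; have := lv j; lra.
Qed.

Lemma fam_s i : s i ord0 = -g ->
  -((delta i ord0 + omega i ord0 + kB i * M + HBd i) * g) <=
  rhs_s B dH Hmin omega delta o s x r v i ord0.
Proof.
move=> hi; rewrite rhs_s_c hi.
have h1 := lbM (hdelta i) (lv i); have h2 := lbM (homega i) (lr i).
have h3 := lbabs (ltW hg) (bx_abs i); have h4 := lbabs (ltW hg) (hv_abs i).
rewrite !mulrDl; lra.
Qed.

Lemma fam_x i : x i ord0 = -g ->
  -((1 * (kB i * M) + kB i * M) * g) <= rhs_x B gamma s x i ord0.
Proof.
move=> hi; rewrite rhs_x_c hi.
have h1 : -((1 * (kB i * M) + kB i * M) * g) <= s i ord0 * bx B x i.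
  apply: L3 => //.
  - exact: kB_ge0.
  - by rewrite mul1r.
  - exact: L1.
  - exact: bx_abs.
have h2 : 0 <= gamma i ord0 * g by rewrite mulr_ge0 // ltW.
rewrite mulrN; lra.
Qed.

Lemma fam_r i : r i ord0 = -g ->
  -((gamma i ord0 + HBd i) * g) <= rhs_r dH Hmin gamma omega o x r v i ord0.
Proof.
move=> hi; rewrite rhs_r_c hi.
have h1 := lbM (hgamma i) (lx i).
have h4 := lbabs (ltW hg) (hv_abs i).
have h2 : 0 <= omega i ord0 * g by rewrite mulr_ge0 // ltW.
rewrite !mulrDl !mulrN !mulNr; lra.
Qed.

Lemma fam_v i : v i ord0 = -g ->
  -((2 * HBd i + HL i * (M + M)) * g) <= rhs_v dH Hmin delta o s r v i ord0.
Proof.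
move=> hi; rewrite rhs_v_c hi.
have h1 : -((2 * HBd i + HL i * (M + M)) * g) <= (s i ord0 + r i ord0) * hv dH Hmin o v i.
  apply: L3 => //; first exact: HL_ge0.
  - have := ls i; have := lr i; lra.
  - exact: hv_lb.
  - apply: le_trans (ler_normD _ _) _; exact: lerD.
  - exact: hv_abs.
have h2 : 0 <= delta i ord0 * g by rewrite mulr_ge0 // ltW.
rewrite mulrN; lra.
Qed.

Lemma fam_all i :
  (o i ord0 = -g -> -(0 * g) <= rhs_o A o x i ord0) /\
  [/\ 1 - o i ord0 = -g -> -((kA i * 3) * g) <= - rhs_o A o x i ord0,
     s i ord0 = -g -> -((delta i ord0 + omega i ord0 + kB i * M + HBd i) * g) <=
       rhs_s B dH Hmin omega delta o s x r v i ord0,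
     x i ord0 = -g -> -((1 * (kB i * M) + kB i * M) * g) <= rhs_x B gamma s x i ord0,
     r i ord0 = -g -> -((gamma i ord0 + HBd i) * g) <= rhs_r dH Hmin gamma omega o x r v i ord0
   & v i ord0 = -g -> -((2 * HBd i + HL i * (M + M)) * g) <= rhs_v dH Hmin delta o s r v i ord0].
Proof.
split; first exact: fam_o.
split; [exact: fam_w|exact: fam_s|exact: fam_x|exact: fam_r|exact: fam_v].
Qed.

End Fam.

Lemma rhs_sum0 (R : realType) (n : nat) (B Hmin dH : 'M[R]_n) (gamma omega delta : 'cV[R]_n)
  (o s x r v : 'cV[R]_n) i :
  rhs_s B dH Hmin omega delta o s x r v i ord0 + rhs_x B gamma s x i ord0 +
  rhs_r dH Hmin gamma omega o x r v i ord0 + rhs_v dH Hmin delta o s r v i ord0 = 0.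
Proof. rewrite rhs_s_c rhs_x_c rhs_r_c rhs_v_c; ring. Qed.


Theorem lemma2 (R : realType) (n : nat)
  (A B Hmin dH : 'M[R]_n) (gamma omega delta : 'cV[R]_n)
  (hA : forall i j, 0 <= A i j) (hB : forall i j, 0 <= B i j)
  (hHmin : forall i j, 0 <= Hmin i j) (hdH : forall i j, 0 <= dH i j)
  (hgamma : forall i, 0 <= gamma i ord0) (homega : forall i, 0 <= omega i ord0)
  (hdelta : forall i, 0 <= delta i ord0)
  (t0 : R) (o s x r v : R -> 'cV[R]_n)
  (* each component is continuous on [t0, +oo) *)
  (co : forall i, cont_from t0 (fun t : R => o t i ord0))
  (cs : forall i, cont_from t0 (fun t : R => s t i ord0))
  (cx : forall i, cont_from t0 (fun t : R => x t i ord0))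
  (cr : forall i, cont_from t0 (fun t : R => r t i ord0))
  (cv : forall i, cont_from t0 (fun t : R => v t i ord0))
  (* the dynamics hold for every t > t0 *)
  (Do : forall t, t0 < t -> forall i,
     is_derive t 1 (fun u => o u i ord0) (rhs_o A (o t) (x t) i ord0))
  (Ds : forall t, t0 < t -> forall i,
     is_derive t 1 (fun u => s u i ord0)
       (rhs_s B dH Hmin omega delta (o t) (s t) (x t) (r t) (v t) i ord0))
  (Dx : forall t, t0 < t -> forall i,
     is_derive t 1 (fun u => x u i ord0) (rhs_x B gamma (s t) (x t) i ord0))
  (Dr : forall t, t0 < t -> forall i,
     is_derive t 1 (fun u => r u i ord0)
       (rhs_r dH Hmin gamma omega (o t) (x t) (r t) (v t) i ord0))
  (Dv : forall t, t0 < t -> forall i,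
     is_derive t 1 (fun u => v u i ord0)
       (rhs_v dH Hmin delta (o t) (s t) (r t) (v t) i ord0))
  (* initial conditions *)
  (io : forall i, 0 <= o t0 i ord0 <= 1)
  (is0 : forall i, 0 <= s t0 i ord0 <= 1)
  (ix : forall i, 0 <= x t0 i ord0 <= 1)
  (ir : forall i, 0 <= r t0 i ord0 <= 1)
  (iv : forall i, 0 <= v t0 i ord0 <= 1)
  (isum : forall i, s t0 i ord0 + x t0 i ord0 + r t0 i ord0 + v t0 i ord0 = 1) :
  forall t, t0 < t -> forall i, 0 <= o t i ord0 <= 1.
Proof.
pose k0 := @Ordinal 8 0 isT. pose k1 := @Ordinal 8 1 isT. pose k2 := @Ordinal 8 2 isT.
pose k3 := @Ordinal 8 3 isT. pose k4 := @Ordinal 8 4 isT. pose k5 := @Ordinal 8 5 isT.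
pose k6 := @Ordinal 8 6 isT. pose k7 := @Ordinal 8 7 isT.
pose Q t i := 1 - (s t i ord0 + x t i ord0 + r t i ord0 + v t i ord0).
pose DS t i := rhs_s B dH Hmin omega delta (o t) (s t) (x t) (r t) (v t) i ord0 +
  rhs_x B gamma (s t) (x t) i ord0 + rhs_r dH Hmin gamma omega (o t) (x t) (r t) (v t) i ord0 +
  rhs_v dH Hmin delta (o t) (s t) (r t) (v t) i ord0.
pose yf (k : 'I_8) (i : 'I_n) (t : R) : R :=
  match val k with
  | 0 => o t i ord0 | 1 => 1 - o t i ord0 | 2 => s t i ord0 | 3 => x t i ord0
  | 4 => r t i ord0 | 5 => v t i ord0 | 6 => Q t i | _ => - Q t i end.
pose yd (k : 'I_8) (i : 'I_n) (t : R) : R :=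
  match val k with
  | 0 => rhs_o A (o t) (x t) i ord0 | 1 => - rhs_o A (o t) (x t) i ord0
  | 2 => rhs_s B dH Hmin omega delta (o t) (s t) (x t) (r t) (v t) i ord0
  | 3 => rhs_x B gamma (s t) (x t) i ord0
  | 4 => rhs_r dH Hmin gamma omega (o t) (x t) (r t) (v t) i ord0
  | 5 => rhs_v dH Hmin delta (o t) (s t) (r t) (v t) i ord0
  | 6 => - DS t i | _ => DS t i end.
pose y (p : ('I_8 * 'I_n)%type) := yf p.1 p.2.
pose y' (p : ('I_8 * 'I_n)%type) := yd p.1 p.2.
have cQ : forall i, {within `[t0, +oo[, continuous (fun t => Q t i)}.
  move=> i; rewrite /Q.
  change {within `[t0, +oo[, continuous (cst 1 - ((fun t => s t i ord0) + (fun t => x t i ord0)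
    + (fun t => r t i ord0) + (fun t => v t i ord0)))}.
  apply: within_continuousB; first exact: cst_continuous.
  apply: within_continuousD; last exact: cv.
  apply: within_continuousD; last exact: cr.
  apply: within_continuousD; [exact: cs | exact: cx].
have Hcont : forall p, {within `[t0, +oo[, continuous (y p)}.
  case=> -[[|[|[|[|[|[|[|[|k]]]]]]]] hk] i //=; rewrite /y /yf /=.
  - exact: co.
  - change {within `[t0, +oo[, continuous (cst 1 - (fun t => o t i ord0))}.
    apply: within_continuousB; [exact: cst_continuous | exact: co].
  - exact: cs.
  - exact: cx.
  - exact: cr.
  - exact: cv.
  - exact: cQ.
  - change {within `[t0, +oo[, continuous (- (fun t => Q t i))}.
    move=> z; apply: cvgN; exact: cQ.
have dQ : forall t, t0 < t -> forall i, is_derive t 1 (cst 1 - ((fun t => s t i ord0) + (fun t => x t i ord0)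
    + (fun t => r t i ord0) + (fun t => v t i ord0))) (- DS t i).
  move=> t ht i.
  have h := is_deriveB (is_derive_cst (1:R) t 1)
    (is_deriveD (is_deriveD (is_deriveD (Ds t ht i) (Dx t ht i)) (Dr t ht i)) (Dv t ht i)).
  apply: (is_derive_eq h).
  by rewrite sub0r /DS.
have Hder : forall p t, t0 < t -> is_derive t 1 (y p) (y' p t).
  case=> -[[|[|[|[|[|[|[|[|k]]]]]]]] hk] i t ht //=; rewrite /y /yf /y' /yd /=.
  - exact: Do.
  - have h := is_deriveB (is_derive_cst (1:R) t 1) (Do t ht i).
    apply: (is_derive_eq h).
    by rewrite sub0r.
  - exact: Ds.
  - exact: Dx.
  - exact: Dr.
  - exact: Dv.
  - exact: dQ.
  - have h := is_deriveN (dQ t ht i).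
    apply: (is_derive_eq h).
    by rewrite opprK.
have Hinit : forall p, 0 <= y p t0.
  case=> -[[|[|[|[|[|[|[|[|k]]]]]]]] hk] i //=; rewrite /y /yf /=.
  - by case/andP: (io i).
  - by case/andP: (io i) => _; rewrite subr_ge0.
  - by case/andP: (is0 i).
  - by case/andP: (ix i).
  - by case/andP: (ir i).
  - by case/andP: (iv i).
  - by rewrite /Q isum subrr.
  - by rewrite /Q isum subrr oppr0.
have Hcond : forall M, 0 <= M -> forall p, exists C, 0 <= C /\ forall t g, t0 < t -> 0 < g ->
     (forall j, -g <= y j t) -> (forall j, `|y j t| <= M) -> y p t = -g -> -(C*g) <= y' p t.
  move=> M hM.
  have pts := fun t g (hg : 0 < g) (Hj : forall j, -g <= y j t) (Hb : forall j, `|y j t| <= M) i =>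
    @fam_all R n A B Hmin dH gamma omega delta hA hB hHmin hdH hgamma homega hdelta M
      (o t) (s t) (x t) (r t) (v t) g hM hg
      (fun j => Hj (k0, j)) (fun j => Hj (k1, j)) (fun j => Hj (k2, j)) (fun j => Hj (k3, j))
      (fun j => Hj (k4, j)) (fun j => Hj (k5, j)) (fun j => Hj (k6, j))
      (fun j => Hb (k0, j)) (fun j => Hb (k2, j)) (fun j => Hb (k3, j)) (fun j => Hb (k4, j))
      (fun j => Hb (k5, j)) i.
  have hM2 : 0 <= M + M by rewrite addr_ge0.
  case=> -[[|[|[|[|[|[|[|[|k]]]]]]]] hk] i //=.
  - eexists; split; last first.
      move=> t g ht hg Hj Hb Hi; rewrite /y' /yd /=; by apply: (pts t g hg Hj Hb i).1; move: Hi; rewrite /y /yf /=.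
    by rewrite lexx.
  - eexists; split; last first.
      move=> t g ht hg Hj Hb Hi; have [F _ _ _ _] := (pts t g hg Hj Hb i).2.
      rewrite /y' /yd /=; by apply: F; move: Hi; rewrite /y /yf /=.
    by rewrite mulr_ge0 // (kA_ge0 hA).
  - eexists; split; last first.
      move=> t g ht hg Hj Hb Hi; have [_ F _ _ _] := (pts t g hg Hj Hb i).2.
      rewrite /y' /yd /=; by apply: F; move: Hi; rewrite /y /yf /=.
    have h1 := HBd_ge0 hHmin hdH hM i; have h2 := mulr_ge0 (kB_ge0 hB i) hM.
    have := hdelta i; have := homega i; lra.
  - eexists; split; last first.
      move=> t g ht hg Hj Hb Hi; have [_ _ F _ _] := (pts t g hg Hj Hb i).2.
      rewrite /y' /yd /=; by apply: F; move: Hi; rewrite /y /yf /=.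
    have h2 := mulr_ge0 (kB_ge0 hB i) hM; lra.
  - eexists; split; last first.
      move=> t g ht hg Hj Hb Hi; have [_ _ _ F _] := (pts t g hg Hj Hb i).2.
      rewrite /y' /yd /=; by apply: F; move: Hi; rewrite /y /yf /=.
    have h1 := HBd_ge0 hHmin hdH hM i; have := hgamma i; lra.
  - eexists; split; last first.
      move=> t g ht hg Hj Hb Hi; have [_ _ _ _ F] := (pts t g hg Hj Hb i).2.
      rewrite /y' /yd /=; by apply: F; move: Hi; rewrite /y /yf /=.
    have h1 := HBd_ge0 hHmin hdH hM i; have h2 := mulr_ge0 (HL_ge0 hHmin hdH hM i) hM2; lra.
  - exists 0; split => // t g ht hg Hj Hb Hi.
    rewrite /y' /yd /= /DS rhs_sum0; lra.
  - exists 0; split => // t g ht hg Hj Hb Hi.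
    rewrite /y' /yd /= /DS rhs_sum0; lra.
have H := @barrier2 R _ t0 y y' Hcont Hder Hinit Hcond.
move=> t ht i.
have h0 := H t (ltW ht) (k0, i); have h1 := H t (ltW ht) (k1, i).
rewrite /y /yf /= in h0 h1.
rewrite h0 /=; lra.
Qed.
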